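(* Let $\psi$ be a convex function $\psi:\mathbb{R}^n\to\mathbb{R}\cup\{+\infty\}$ whose domain has nonempty interior, and let $F_1,F_2:\mathbb{R}\to(0,\infty)$ be measurable with $0<I(F_1\circ\psi,\psi)<\infty$ and $0<I(F_2\circ\psi^*,\psi^* )<\infty$. Then: (a) For $h\in\Phi$, $$as_{h,F_1,F_2}^{orlicz}(\psi)\le I(F_1\circ\psi,\psi)\cdot h\Big(\frac{(\sqrt{2\pi})^n}{I(F_2\circ\psi^*,\psi^* )}\Big),$$ and if in addition $F_2\circ\psi^*$ is log-concave, $$as_{h,F_1,F_2}^{orlicz}(\psi)\le G_{h,F_1,F_2}^{orlicz}(\psi)\le I(F_1\circ\psi,\psi)\cdot h\Big(\frac{(\sqrt{2\pi})^n}{I(F_2\circ\psi^*,\psi^* )}\Big).$$ In particular, for $h\in\Phi$ and $f=e^{-\psi}$ (with $f^\circ=e^{-\psi^*}$), $$as_h^{orlicz}(f)\le G_h^{orlicz}(f)\le I(f)\cdot h\Big(\frac{(\sqrt{2\pi})^n}{I(f^\circ)}\Big).$$ (b) For $h\in\Psi$, the same inequalities hold reversed: $$as_{h,F_1,F_2}^{orlicz}(\psi)\ge I(F_1\circ\psi,\psi)\cdot h\Big(\frac{(\sqrt{2\pi})^n}{I(F_2\circ\psi^*,\psi^* )}\Big),$$ and if in addition $F_2\circ\psi^*$ is log-concave, $$as_{h,F_1,F_2}^{orlicz}(\psi)\ge G_{h,F_1,F_2}^{orlicz}(\psi)\ge I(F_1\circ\psi,\psi)\cdot h\Big(\frac{(\sqrt{2\pi})^n}{I(F_2\circ\psi^*,\psi^*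 )}\Big);$$ in particular, for $f=e^{-\psi}$, $$as_h^{orlicz}(f)\ge G_h^{orlicz}(f)\ge I(f)\cdot h\Big(\frac{(\sqrt{2\pi})^n}{I(f^\circ)}\Big).$$
   Context: $\psi^*(y)=\sup_{x\in\mathbb{R}^n}(\langle x,y\rangle-\psi(x))$ is the Legendre transform. $X_\psi=\{x:\psi(x)<\infty,\ \nabla^2\psi(x)\text{ (Alexandrov Hessian) exists and is invertible}\}$. For a function $g$ on $X_{\psi^*}$, $I(g,\psi^* )=\int_{X_{\psi^*}}g(y)\,dy$; similarly $I(F_1\circ\psi,\psi)=\int_{X_\psi}F_1(\psi(x))\,dx$, $I(f)=\int f$. $\mathcal{F}^+_{\psi^*}$ is the set of positive integrable functions $g$ on $X_{\psi^*}$ with $0<I(g,\psi^* )<\infty$, and $\mathcal{L}_{\psi^*}$ its subset of log-concave functions. $h:(0,\infty)\to(0,\infty)$ continuous; $\Phi$ is the class of $h$ that are constant or strictly convex; $\Psi$ is the class of $h$ that are constant or increasing strictly concave. The Orlicz mixed integral is $V_{h,F_1,F_2}(\psi,g)=\int_{X_\psi}h\Big(\frac{g(\nabla\psi(x))}{F_2(\langle x,\nabla\psi(x)\rangle-\psi(x))}\Big)F_1(\psi(x))\,dx$. For $h\in\Phi$: $as_{h,F_1,F_2}^{orlicz}(\psi)=\inf_{g\in\mathcal{F}^+_{\psi^*}}V_{h,F_1,F_2}\big(\psi,\frac{(\sqrt{2\pi})^n g}{I(g,\psi^* )}\big)$ and $G_{h,F_1,F_2}^{orlicz}(\psi)$ is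 the same infimum over $g\in\mathcal{L}_{\psi^*}$; for $h\in\Psi$ both are defined with $\sup$ in place of $\inf$. For $f=e^{-\psi}$, $as_h^{orlicz}(f)=as_{h,e^{-t},e^{-t}}^{orlicz}(\psi)$ and $G_h^{orlicz}(f)=G_{h,e^{-t},e^{-t}}^{orlicz}(\psi)$. Functions are assumed smooth and integrable enough for all expressions to be well defined. *)

(* Defs.v *)
From HB Require Import structures.
From mathcomp Require Import all_boot all_order all_algebra.
From mathcomp Require Import all_classical all_reals all_analysis.
Set Implicit Arguments. Unset Strict Implicit. Unset Printing Implicit Defensive.
Import Order.TTheory GRing.Theory Num.Theory.
Import numFieldNormedType.Exports.
Local Open Scope classical_set_scope.
Local Open Scope ring_scope.

Section Defs.
Variable R : realType.
Variable n : nat.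
Local Notation V := 'rV[R]_n.

Definition dotr (x y : V) : R := \sum_(i < n) x ord0 i * y ord0 i.

(* Iterated one-dimensional Lebesgue integrals (Tonelli): for nonnegative
   measurable f this is the integral of f w.r.t. Lebesgue measure on R^n. *)
Definition set_coord (k : nat) (t : R) (x : nat -> R) : nat -> R :=
  fun j => if j == k then t else x j.

Fixpoint iter_integral (k : nat) (f : (nat -> R) -> \bar R) (x : nat -> R)
  : \bar R :=
  match k with
  | 0 => f x
  | k'.+1 => (\int[@lebesgue_measure R]_(t in setT)
                iter_integral k' f (set_coord k' t x))%E
  end.

Definition row_of (x : nat -> R) : V := \row_(i < n) x i.

Definition lebint (f : V -> \bar R) : \bar R :=
  iter_integral n (fun x => f (row_of x)) (fun _ => 0).

Definition lebint_on (A : set V) (f : V -> \bar R) : \bar R :=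
  lebint (fun x => if x \in A then f x else 0%E).

(* Borel measurability on R^n (via n.-tuple R, product of Borel sigma-algebras) *)
Definition tuple_to_row (t : n.-tuple R) : V := \row_(i < n) tnth t i.
Definition measurable_Rn (g : V -> R) : Prop :=
  measurable_fun [set: n.-tuple R] (g \o tuple_to_row).

Definition dom (psi : V -> \bar R) : set V := [set x | (psi x < +oo)%E].

Definition convex_ext (psi : V -> \bar R) : Prop :=
  (forall x, psi x != -oo%E) /\
  forall (x y : V) (t : R), 0 < t < 1 ->
    (psi ((1 - t) *: x + t *: y)%R <= (1 - t)%:E * psi x + t%:E * psi y)%E.

Definition legendre (psi : V -> \bar R) : V -> \bar R :=
  fun y => ereal_sup [set ((dotr x y)%:E - psi x)%E | x in [set: V]].

Definition alexandrov_expansion (psi : V -> \bar R) (x g : V) (A : 'M[R]_n)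
  : Prop :=
  (psi x < +oo)%E /\ A^T = A /\
  forall eps : R, 0 < eps -> exists delta : R, 0 < delta /\
    forall h : V, dotr h h < delta ->
      exists r : R, psi (x + h)%R = r%:E /\
        `| r - (fine (psi x) + dotr g h + 2^-1 * dotr (h *m A) h) |
          <= eps * dotr h h.

Definition Xset (psi : V -> \bar R) : set V :=
  [set x | (psi x < +oo)%E /\
     exists g A, alexandrov_expansion psi x g A /\ A \in unitmx].

Definition grad (psi : V -> \bar R) (x : V) : V :=
  xget 0 [set g | exists A, alexandrov_expansion psi x g A].

Definition Iint (g : V -> R) (psi : V -> \bar R) : \bar R :=
  lebint_on (Xset psi) (fun y => (g y)%:E).

Definition IF (F : R -> R) (psi : V -> \bar R) : \bar R :=
  Iint (fun x => F (fine (psi x))) psi.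

Definition log_concave (G : V -> R) : Prop :=
  (forall x, 0 <= G x) /\
  forall (x y : V) (t : R), 0 <= t <= 1 ->
    powR (G x) (1 - t) * powR (G y) t <= G ((1 - t) *: x + t *: y).

Definition log_concave_on (A : set V) (g : V -> R) : Prop :=
  exists G, log_concave G /\ forall y, A y -> G y = g y.

Definition Fplus (psi : V -> \bar R) : set (V -> R) :=
  [set g | (forall y, 0 < g y) /\ measurable_Rn g /\
     (0 < Iint g (legendre psi))%E /\ (Iint g (legendre psi) < +oo)%E].

Definition Lclass (psi : V -> \bar R) : set (V -> R) :=
  [set g | Fplus psi g /\ log_concave_on (Xset (legendre psi)) g].

Definition Vorlicz (h F1 F2 : R -> R) (psi : V -> \bar R) (g : V -> R)
  : \bar R :=
  lebint_on (Xset psi) (fun x =>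
    (h (g (grad psi x) / F2 (dotr x (grad psi x) - fine (psi x)))
       * F1 (fine (psi x)))%:E).

Definition cst_n : R := Num.sqrt (2 * pi) ^+ n.

Definition normalize (psi : V -> \bar R) (g : V -> R) : V -> R :=
  fun y => cst_n * g y / fine (Iint g (legendre psi)).

Definition orlicz_values (h F1 F2 : R -> R) (psi : V -> \bar R)
  (C : set (V -> R)) : set (\bar R) :=
  [set Vorlicz h F1 F2 psi (normalize psi g) | g in C].

(* h in Phi: as / G defined by infima *)
Definition as_inf h F1 F2 psi := ereal_inf (orlicz_values h F1 F2 psi (Fplus psi)).
Definition G_inf  h F1 F2 psi := ereal_inf (orlicz_values h F1 F2 psi (Lclass psi)).
(* h in Psi: as / G defined by suprema *)
Definition as_sup h F1 F2 psi := ereal_sup (orlicz_values h F1 F2 psi (Fplus psi)).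
Definition G_sup  h F1 F2 psi := ereal_sup (orlicz_values h F1 F2 psi (Lclass psi)).

End Defs.

Definition hbasic {R : realType} (h : R -> R) : Prop :=
  (forall x : R, 0 < x -> 0 < h x) /\
  (forall x : R, 0 < x -> {for x, continuous h}).

Definition const_pos {R : realType} (h : R -> R) : Prop :=
  exists c : R, forall x, 0 < x -> h x = c.

Definition strictly_convex_pos {R : realType} (h : R -> R) : Prop :=
  forall x y t : R, 0 < x -> 0 < y -> x != y -> 0 < t < 1 ->
    h ((1 - t) * x + t * y) < (1 - t) * h x + t * h y.

Definition strictly_concave_pos {R : realType} (h : R -> R) : Prop :=
  forall x y t : R, 0 < x -> 0 < y -> x != y -> 0 < t < 1 ->
    (1 - t) * h x + t * h y < h ((1 - t) * x + t * y).

Definition increasing_pos {R : realType} (h : R -> R) : Prop :=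
  forall x y : R, 0 < x -> x <= y -> h x <= h y.

Definition PhiClass {R : realType} (h : R -> R) : Prop :=
  hbasic h /\ (const_pos h \/ strictly_convex_pos h).

Definition PsiClass {R : realType} (h : R -> R) : Prop :=
  hbasic h /\ (const_pos h \/ (increasing_pos h /\ strictly_concave_pos h)).

(* Main.v *)
Require Import Defs.
From HB Require Import structures.
From mathcomp Require Import all_boot all_order all_algebra.
From mathcomp Require Import all_classical all_reals all_analysis.
From mathcomp Require Import ring lra measurable_realfun.
Import Order.TTheory GRing.Theory Num.Theory.
Import numFieldNormedType.Exports.
Local Open Scope classical_set_scope.
Local Open Scope ring_scope.

Section S.
Import HBNNSimple.
Variable R : realType.
Local Open Scope ereal_scope.

Lemma sint_scale d (T : measurableType d) (mu : {measure set T -> \bar R})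
  (k : R) (k0 : (0 <= k)%R) (h : {nnsfun T >-> R}) :
  sintegral mu (scale_nnsfun h k0) = k%:E * sintegral mu h.
Proof. by rewrite -sintegralrM. Qed.

Lemma integralZ_nm d (T : measurableType d) (mu : {measure set T -> \bar R})
  (k : R) (f : T -> \bar R) : (0 < k)%R -> (forall x, 0 <= f x) ->
  \int[mu]_(x in setT) (k%:E * f x) = k%:E * \int[mu]_(x in setT) f x.
Proof.
move=> k0 f0.
have kf0 x : 0 <= k%:E * f x by rewrite mule_ge0 // lee_fin ltW.
rewrite !ge0_integralTE //.
have ki0 : (0 <= k^-1)%R by rewrite invr_ge0 ltW.
apply/eqP; rewrite eq_le; apply/andP; split.
- apply: ge_ereal_sup => _ [h /= hle <-].
  have -> : sintegral mu h = k%:E * sintegral mu (scale_nnsfun h ki0).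
    rewrite -(@sint_scale _ _ _ k (ltW k0)). apply: eq_sintegral => x /=.
    by rewrite mulrA mulfV ?mul1r // gt_eqF.
  rewrite lee_pmul2l ?lte_fin //; apply: ereal_sup_ubound; exists (scale_nnsfun h ki0) => //= x.
  rewrite /= -(@lee_pmul2l _ k%:E) ?lte_fin // -EFinM mulrA mulfV ?gt_eqF // mul1r.
  exact: hle.
- have : ereal_sup [set sintegral mu h | h in [set h : {nnsfun T >-> R} | forall x, (h x)%:E <= f x]]
     <= k^-1%:E * ereal_sup [set sintegral mu h | h in [set h : {nnsfun T >-> R} | forall x, (h x)%:E <= k%:E * f x]].
    apply: ge_ereal_sup => _ [h /= hle <-].
    have -> : sintegral mu h = k^-1%:E * sintegral mu (scale_nnsfun h (ltW k0)).
      rewrite -(@sint_scale _ _ _ k^-1 ki0); apply: eq_sintegral => x /=.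
      by rewrite mulrA mulVf ?mul1r // gt_eqF.
    rewrite lee_pmul2l ?lte_fin ?invr_gt0 //; apply: ereal_sup_ubound; exists (scale_nnsfun h (ltW k0)) => //= x.
    by rewrite EFinM lee_pmul2l ?lte_fin.
  move=> H; rewrite -(@lee_pmul2l _ k%:E) ?lte_fin // in H.
  by rewrite muleA -EFinM mulfV ?gt_eqF // mul1e in H.
Qed.
End S.

Section A.
Variable R : realType.
Variable n : nat.
Local Notation V := 'rV[R]_n.

Definition boxopen (S : set V) : Prop :=
  forall y, S y -> exists2 r : R, 0 < r &
    forall z : V, (forall i, `|z ord0 i - y ord0 i| < r) -> S z.

Definition rbox (p : n.-tuple rat * nat) : set (n.-tuple R) :=
  \bigcap_(i in [set: 'I_n]) [set t | `|tnth t i - ratr (tnth p.1 i)| < p.2.+1%:R^-1].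

Lemma rbox_measurable p : measurable (rbox p).
Proof.
apply: fin_bigcap_measurable; first exact: finite_finset.
move=> i _.
have -> : [set t : n.-tuple R | `|tnth t i - ratr (tnth p.1 i)| < p.2.+1%:R^-1] =
  [set: n.-tuple R] `&` (fun t => tnth t i) @^-1` (ball (ratr (tnth p.1 i) : R) p.2.+1%:R^-1).
  apply/seteqP; split => t /=.
    by move=> H; split => //; rewrite /ball /= distrC.
  by move=> [_]; rewrite /ball /= distrC.
by apply: measurable_tnth => //; exact: measurable_realfun.measurable_ball.
Qed.

Lemma boxopen_measurable (S : set V) : boxopen S ->
  measurable [set t : n.-tuple R | S (tuple_to_row t)].
Proof.
move=> hS.
pose F p := if `[< rbox p `<=` [set t | S (tuple_to_row t)] >] then rbox p else set0.
have -> : [set t : n.-tuple R | S (tuple_to_row t)] = \bigcup_p F p.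
  apply/seteqP; split; last first.
    move=> t [p _]; rewrite /F; case: asboolP => [H /H //|_ //].
  move=> t /= St.
  have [r r0 Hr] := hS _ St.
  have [m hm] : exists m : nat, m.+1%:R^-1 < r / 2.
    have [m hm] := @ltr_add_invr R 0 (r / 2) (ltac:(by rewrite divr_gt0)).
    by exists m; rewrite add0r in hm.
  have hq : forall i : 'I_n, exists q : rat,
      `|tnth t i - ratr q| < m.+1%:R^-1.
    move=> i.
    have e0 : 0 < m.+1%:R^-1 :> R by rewrite invr_gt0.
    have lt0 : tnth t i - m.+1%:R^-1 < tnth t i + m.+1%:R^-1.
      by rewrite ltrD2l gtrN.
    have [q] := @rat_in_itvoo R _ _ lt0.
    rewrite in_itv /= => /andP[h1 h2]; exists q.
    rewrite ltr_norml; apply/andP; split; set e := m.+1%:R^-1 in h1 h2 *; lra.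
  have [f hf] := boolp.choice hq.
  exists ([tuple f i | i < n], m) => //.
  have tbox : rbox ([tuple f i | i < n], m) t.
    by move=> i _ /=; rewrite tnth_mktuple; exact: hf.
  rewrite /F; case: asboolP => // nsub; exfalso; apply: nsub.
  move=> u ub /=; apply: Hr => i.
  rewrite /tuple_to_row !mxE.
  have h1 := ub i Logic.I; have h2 := tbox i Logic.I.
  rewrite /= tnth_mktuple in h1 h2.
  rewrite (_ : tnth u i - tnth t i = (tnth u i - ratr (f i)) - (tnth t i - ratr (f i))); last by rewrite opprB addrA subrK.
  apply: (le_lt_trans (ler_normB _ _)).
  apply: (lt_le_trans (ltrD h1 h2)).
  set e := m.+1%:R^-1 in hm *; lra.
apply: countable_bigcupT_measurable; first exact: countableP.
move=> p; rewrite /F; case: asboolP => _ //; exact: rbox_measurable.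
Qed.

Lemma dotr_diff (x y z : V) r : (forall i, `|z ord0 i - y ord0 i| <= r) ->
  `|dotr x z - dotr x y| <= (\sum_i `|x ord0 i|) * r.
Proof.
move=> H; rewrite /dotr -sumrB.
under eq_bigr do rewrite -mulrBr.
apply: (le_trans (ler_norm_sum _ _ _)).
rewrite mulr_suml; apply: ler_sum => i _; rewrite normrM.
by apply: ler_wpM2l.
Qed.

Lemma legendre_boxopen (psi : V -> \bar R) (a : R) :
  boxopen [set y | (a%:E < legendre psi y)%E].
Proof.
move=> y /= /ereal_sup_gt [_ [x _ <-] ax].
have ub z : ((dotr x z)%:E - psi x <= legendre psi z)%E.
  by apply: ereal_sup_ubound; exists x.
move: ax; case E : (psi x) => [c| |] ax.
- set s := \sum_i `|x ord0 i|.
  have s0 : 0 <= s by apply: sumr_ge0 => i _.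
  have m0 : 0 < dotr x y - c - a by move: ax; rewrite -EFinD lte_fin; lra.
  exists ((dotr x y - c - a) / (1 + s)).
    by rewrite divr_gt0 // ltr_pwDl.
  move=> z hz; apply: (lt_le_trans _ (ub z)); rewrite E -EFinD lte_fin.
  have := @dotr_diff x y z ((dotr x y - c - a) / (1 + s)) (fun i => ltW (hz i)).
  rewrite ler_norml => /andP[h1 _].
  have : s * ((dotr x y - c - a) / (1 + s)) < dotr x y - c - a.
    rewrite mulrC -mulrA gtr_pMr // mulrC ltr_pdivrMr ?mul1r; lra.
  move: h1; rewrite -/s; set w := (_ / (1 + s)); lra.
- by move: ax; rewrite /= addeC /=.
- by exists 1 => // z _; apply: (lt_le_trans _ (ub z)); rewrite E /= ltry.
Qed.

Lemma legendre_meas (psi : V -> \bar R) (F : R -> R) :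
  measurable_fun [set: R] F ->
  measurable_Rn (fun y => F (fine (legendre psi y))).
Proof.
move=> mF; rewrite /measurable_Rn.
rewrite (_ : _ \o _ = F \o (fine \o (legendre psi \o @tuple_to_row R n))) //.
apply: (measurableT_comp mF).
have mf : measurable_fun [set: \bar R] (@fine R).
  by apply: fine_measurable.
apply: (measurableT_comp mf).
apply: (measurability _ (ErealGenOInfty.measurableE R)).
move=> _ [_ [a ->] <-].
rewrite setTI.
have -> : (legendre psi \o @tuple_to_row R n) @^-1` `]a%:E, +oo[%classic =
  [set t | [set y | (a%:E < legendre psi y)%E] (tuple_to_row t)].
  apply/seteqP; split => t /=; rewrite in_itv /= andbT //.
apply: boxopen_measurable; exact: legendre_boxopen.
Qed.
End A.

Section B.
Variable R : realType.

Lemma small_t (D K P delta : R) : 0 < D -> 0 <= K -> 0 <= P -> 0 < delta ->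
  exists t, [/\ 0 < t, t < 1, t ^+ 2 * P < delta & t * K < D].
Proof.
move=> D0 K0 P0 d0.
pose t := Num.min (2^-1) (Num.min (delta / (2 * (P + 1))) (D / (2 * (K + 1)))).
have t0 : 0 < t by rewrite !lt_min !divr_gt0 ?invr_gt0 //; lra.
have : t <= t by [].
rewrite {2}/t !le_min => /and3P[h1 h2 h3].
rewrite ler_pdivlMr in h2; last lra.
rewrite ler_pdivlMr in h3; last lra.
exists t; split => //; [lra | nra | nra].
Qed.
End B.

Section B2.
Variable R : realType.
Variable n : nat.
Local Notation V := 'rV[R]_n.

Lemma dotrC (x y : V) : dotr x y = dotr y x.
Proof. by rewrite /dotr; apply: eq_bigr => i _; rewrite mulrC. Qed.
Lemma dotrZl t (x y : V) : dotr (t *: x) y = t * dotr x y.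
Proof. by rewrite /dotr mulr_sumr; apply: eq_bigr => i _; rewrite mxE mulrA. Qed.
Lemma dotrZr t (x y : V) : dotr x (t *: y) = t * dotr x y.
Proof. by rewrite dotrC dotrZl dotrC. Qed.
Lemma dotrBl (x y z : V) : dotr (x - y) z = dotr x z - dotr y z.
Proof. by rewrite /dotr -sumrB; apply: eq_bigr => i _; rewrite !mxE mulrBl. Qed.
Lemma dotr_ge0 (x : V) : 0 <= dotr x x.
Proof. by apply: sumr_ge0 => i _; rewrite -expr2 sqr_ge0. Qed.

Lemma mid_eq (x z : V) t : (1 - t) *: x + t *: z = x + t *: (z - x).
Proof. by apply/rowP => i; rewrite !mxE; ring. Qed.

Lemma subgrad (psi : V -> \bar R) x g A : convex_ext psi ->
  alexandrov_expansion psi x g A ->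
  forall z, ((dotr z g)%:E - psi z <= (dotr x g)%:E - psi x)%E.
Proof.
move=> [nm cv] [xfin [_ hexp]] z.
have [c Ec] : exists c, psi x = c%:E.
  move: (nm x) xfin; case: (psi x) => [c| |] //; by exists c.
case Ez : (psi z) => [b| |]; last by move: (nm z); rewrite Ez.
2: by rewrite /= leNye.
rewrite Ec -!EFinD lee_fin leNgt; apply/negP => H.
set h := z - x.
set D := (dotr z g - b) - (dotr x g - c).
have D0 : 0 < D by rewrite /D subr_gt0.
set P := dotr h h.
set Q := dotr (h *m A) h.
have P0 : 0 <= P by apply: dotr_ge0.
have [delta [d0 Hd]] := hexp 1 ltr01.
have K0 : 0 <= `|Q| + P by rewrite addr_ge0.
have [t [t0 t1 tP tK]] := @small_t R _ _ _ _ D0 K0 P0 d0.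
rewrite addrC in tK.
have [r [Er Hr]] : exists r : R, psi (x + t *: h) = r%:E /\
   `|r - (fine (psi x) + dotr g (t *: h) + 2^-1 * dotr ((t *: h) *m A) (t *: h))|
          <= 1 * dotr (t *: h) (t *: h).
  by apply: Hd; rewrite dotrZl dotrZr mulrA -expr2.
have cvx := cv x z t ltac:(apply/andP; split => //).
rewrite mid_eq Er Ec Ez -!EFinM -EFinD lee_fin in cvx.
rewrite Ec /= -scalemxAl !dotrZl !dotrZr -/Q -/P mul1r in Hr.
have hG : dotr g h = dotr z g - dotr x g by rewrite dotrC dotrBl.
rewrite hG in Hr.
move: Hr; rewrite ler_norml => /andP[Hr1 _].
have hQ : - `|Q| <= Q by apply: lerNnormlW.
have hQ2 : - (t * (t * `|Q|)) <= t * (t * Q).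
  by rewrite -mulrN; apply: ler_wpM2l; [lra|]; rewrite -mulrN; apply: ler_wpM2l; [lra|].
have key : t * D <= t * (t * (P + `|Q|)).
  have w0 : 0 <= t * (t * `|Q|) by rewrite !mulr_ge0 // ltW.
  rewrite /D; move: Hr1 cvx hQ2 w0; rewrite !(mulrDr, mulrBr, mulrBl, mulrN, mul1r).
  set a1 := t * dotr z g; set a2 := t * dotr x g; set a3 := t * c; set a4 := t * b.
  set u := t * (t * Q); set v := t * (t * P); set w := t * (t * `|Q|).
  lra.
have : t * (t * (P + `|Q|)) < t * D by rewrite ltr_pM2l.
lra.
Qed.
End B2.

Section B3.
Variable R : realType.
Variable n : nat.
Local Notation V := 'rV[R]_n.

Lemma grad_spec (psi : V -> \bar R) x : Xset psi x ->
  exists A, alexandrov_expansion psi x (grad psi x) A.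
Proof.
move=> [_ [g [A [hA _]]]].
by apply: (@xgetPex _ 0 [set g | exists A, alexandrov_expansion psi x g A]); exists g, A.
Qed.

Lemma legendre_grad (psi : V -> \bar R) x : convex_ext psi -> Xset psi x ->
  legendre psi (grad psi x) = (dotr x (grad psi x) - fine (psi x))%:E.
Proof.
move=> cvx Xx.
have [A hA] := @grad_spec _ _ Xx.
have [c Ec] : exists c, psi x = c%:E.
  move: Xx => [+ _]; move: (cvx.1 x); case: (psi x) => [c| |] //; by exists c.
rewrite Ec /=.
apply/eqP; rewrite eq_le; apply/andP; split.
- apply: ge_ereal_sup => _ [z _ <-].
  by have := @subgrad _ _ _ _ _ _ cvx hA z; rewrite Ec.
- by apply: ereal_sup_ubound; exists x => //; rewrite Ec.
Qed.
End B3.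

Section D.
Variable R : realType.
Variable n : nat.
Local Notation V := 'rV[R]_n.

Lemma legendre_gtNy (psi : V -> \bar R) : convex_ext psi ->
  interior (dom psi) !=set0 -> forall y, (-oo < legendre psi y)%E.
Proof.
move=> cvx [x0 /interior_subset hx0] y.
have [c Ec] : exists c, psi x0 = c%:E.
  move: hx0 (cvx.1 x0); rewrite /dom /=; case: (psi x0) => [c| |] //; by exists c.
apply: (lt_le_trans _ (_ : ((dotr x0 y)%:E - psi x0 <= _)%E)).
  by rewrite Ec -EFinD ltNyr.
by apply: ereal_sup_ubound; exists x0.
Qed.

Lemma legendre_convex (psi : V -> \bar R) (x y : V) (t a b : R) :
  convex_ext psi -> 0 <= t <= 1 ->
  legendre psi x = a%:E -> legendre psi y = b%:E ->
  (legendre psi ((1 - t) *: x + t *: y) <= ((1 - t) * a + t * b)%:E)%E.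
Proof.
move=> cvx /andP[t0 t1] Ea Eb.
apply: ge_ereal_sup => _ [z _ <-].
case Ez : (psi z) => [w| |]; last by move: (cvx.1 z); rewrite Ez.
2: by rewrite /= leNye.
rewrite -EFinD lee_fin.
have ha : ((dotr z x)%:E - psi z <= legendre psi x)%E by apply: ereal_sup_ubound; exists z.
have hb : ((dotr z y)%:E - psi z <= legendre psi y)%E by apply: ereal_sup_ubound; exists z.
rewrite Ea Ez -EFinD lee_fin in ha; rewrite Eb Ez -EFinD lee_fin in hb.
have -> : dotr z ((1 - t) *: x + t *: y) = (1 - t) * dotr z x + t * dotr z y.
  rewrite /dotr !mulr_sumr -big_split; apply: eq_bigr => i _; rewrite !mxE /=; ring.
have h1 : (1 - t) * (dotr z x - w) <= (1 - t) * a by apply: ler_wpM2l => //; lra.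
have h2 : t * (dotr z y - w) <= t * b by apply: ler_wpM2l.
lra.
Qed.

Definition Gexp (psi : V -> \bar R) (y : V) : R :=
  if legendre psi y \is a fin_num then expR (- fine (legendre psi y)) else 0.

Lemma Gexp_logconcave (psi : V -> \bar R) : convex_ext psi ->
  interior (dom psi) !=set0 -> log_concave (Gexp psi).
Proof.
move=> cvx hint; split.
  by move=> x; rewrite /Gexp; case: ifP => // _; exact: expR_ge0.
move=> x y t /andP[t0 t1].
have G0 z : 0 <= Gexp psi z by rewrite /Gexp; case: ifP => // _; exact: expR_ge0.
have [->|tn0] := eqVneq t 0.
  rewrite subr0 powRr1 // powRr0 mulr1 scale1r scale0r addr0 //.
have [->|tn1] := eqVneq t 1.
  rewrite subrr powRr1 // powRr0 mul1r scale0r scale1r add0r //.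
have t0' : 0 < t by rewrite lt_def tn0.
have t1' : t < 1 by rewrite lt_def eq_sym tn1.
rewrite /Gexp.
case: ifPn => hx; last first.
  by rewrite powR0 ?mul0r ?G0 //; rewrite subr_eq0 eq_sym.
case: ifPn => hy; last by rewrite powR0 ?mulr0 ?G0.
have [a Ea] : exists a, legendre psi x = a%:E.
  by move: hx; case: (legendre psi x) => [a| |] //; exists a.
have [b Eb] : exists b, legendre psi y = b%:E.
  by move: hy; case: (legendre psi y) => [b| |] //; exists b.
have t01 : 0 <= t <= 1 by apply/andP; split.
have hm := @legendre_convex psi x y t a b cvx t01 Ea Eb.
have hgt := @legendre_gtNy _ cvx hint ((1 - t) *: x + t *: y).
have [m Em] : exists m, legendre psi ((1 - t) *: x + t *: y) = m%:E.
  move: hm hgt; case: (legendre psi ((1 - t) *: x + t *: y)) => [m _ _| |]; [by exists m| |by rewrite ltxx].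
  by rewrite leye_eq.
rewrite Em Ea Eb /= in hm *.
rewrite lee_fin in hm.
rewrite -!expRM -expRD ler_expR.
lra.
Qed.
End D.

Section K.
Variable R : realType.
Variable n : nat.
Local Notation V := 'rV[R]_n.

Lemma iter_ge0 k (f : (nat -> R) -> \bar R) x : (forall y, 0 <= f y)%E ->
  (0 <= iter_integral k f x)%E.
Proof.
move=> f0; elim: k x => [|k IH] x //=.
by apply: integral_ge0 => t _; exact: IH.
Qed.

Lemma iterZ k (c : R) (f : (nat -> R) -> \bar R) x : 0 < c -> (forall y, 0 <= f y)%E ->
  iter_integral k (fun y => c%:E * f y)%E x = (c%:E * iter_integral k f x)%E.
Proof.
move=> c0 f0; elim: k x => [|k IH] x //=.
under eq_integral => t _ do rewrite IH.
apply: integralZ_nm => // t; exact: iter_ge0.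
Qed.

Lemma lebintZ (c : R) (f : V -> \bar R) : 0 < c -> (forall y, 0 <= f y)%E ->
  lebint (fun y => c%:E * f y)%E = (c%:E * lebint f)%E.
Proof. by move=> c0 f0; rewrite /lebint iterZ. Qed.
End K.

Section W.
Variable R : realType.
Variable n : nat.
Local Notation V := 'rV[R]_n.

Lemma cst_n_gt0 : 0 < cst_n R n.
Proof. by rewrite /cst_n exprn_gt0 // sqrtr_gt0 mulr_gt0 // pi_gt0. Qed.

Lemma witness (psi : V -> \bar R) (F1 F2 h : R -> R) :
  convex_ext psi -> interior (dom psi) !=set0 ->
  (forall t, 0 < F1 t) -> (forall t, 0 < F2 t) -> measurable_fun [set: R] F2 ->
  (0 < IF F2 (legendre psi))%E -> (IF F2 (legendre psi) < +oo)%E ->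
  (forall x, 0 < x -> 0 < h x) ->
  Fplus psi (fun y => F2 (fine (legendre psi y))) /\
  Vorlicz h F1 F2 psi (normalize psi (fun y => F2 (fine (legendre psi y)))) =
   (IF F1 psi * (h (cst_n R n / fine (IF F2 (legendre psi))))%:E)%E.
Proof.
move=> cvx hint F1p F2p mF2 I0 Ioo hp.
split.
  split; first by move=> y; exact: F2p.
  split; first exact: legendre_meas.
  by split.
set I := fine (IF F2 (legendre psi)).
have I0' : 0 < I by apply: fine_gt0; rewrite I0 Ioo.
have c0 : 0 < cst_n R n / I by rewrite divr_gt0 // cst_n_gt0.
rewrite muleC /IF /Iint /lebint_on /Vorlicz /lebint_on -lebintZ; last 2 first.
- exact: hp.
- by move=> y; case: ifP => _ //; rewrite lee_fin ltW.
congr lebint; apply/funext => x.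
case: ifP => xin; last by rewrite mule0.
have Xx : Xset psi x by rewrite inE in xin.
rewrite /normalize legendre_grad //= -EFinM; congr (_%:E); congr (_ * _); congr h.
rewrite -/I; have := F2p (dotr x (grad psi x) - fine (psi x)).
set v := F2 _ => v0.
by rewrite mulrAC mulfK // gt_eqF.
Qed.
End W.

Section M.
Variable R : realType.
Variable n : nat.
Local Notation V := 'rV[R]_n.

Lemma inf_sub (h F1 F2 : R -> R) (psi : V -> \bar R) :
  (as_inf h F1 F2 psi <= G_inf h F1 F2 psi)%E.
Proof. by apply: le_ereal_inf => _ [g [Fg _] <-]; exists g. Qed.

Lemma sup_sub (h F1 F2 : R -> R) (psi : V -> \bar R) :
  (G_sup h F1 F2 psi <= as_sup h F1 F2 psi)%E.
Proof. by apply: ereal_sup_le => _ [g [Fg _] <-]; exists g. Qed.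

Lemma gen (psi : V -> \bar R) (F1 F2 h : R -> R) :
  convex_ext psi -> interior (dom psi) !=set0 ->
  (forall t, 0 < F1 t) -> (forall t, 0 < F2 t) -> measurable_fun [set: R] F2 ->
  (0 < IF F2 (legendre psi))%E -> (IF F2 (legendre psi) < +oo)%E ->
  hbasic h ->
  let b := (IF F1 psi * (h (cst_n R n / fine (IF F2 (legendre psi))))%:E)%E in
  [/\ (as_inf h F1 F2 psi <= b)%E, (b <= as_sup h F1 F2 psi)%E &
     log_concave_on (Xset (legendre psi)) (fun y => F2 (fine (legendre psi y))) ->
     (G_inf h F1 F2 psi <= b)%E /\ (b <= G_sup h F1 F2 psi)%E].
Proof.
move=> cvx hint F1p F2p mF2 I0 Ioo [hp _] b.
have [Fg HV] := @witness _ _ psi F1 F2 h cvx hint F1p F2p mF2 I0 Ioo hp.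
rewrite /b -HV; split.
- by apply: ereal_inf_lbound; exists (fun y => F2 (fine (legendre psi y))).
- by apply: ereal_sup_ubound; exists (fun y => F2 (fine (legendre psi y))).
- move=> lc; split.
  + by apply: ereal_inf_lbound; exists (fun y => F2 (fine (legendre psi y))).
  + by apply: ereal_sup_ubound; exists (fun y => F2 (fine (legendre psi y))).
Qed.
End M.

Theorem proposition2p1 (R : realType) (n : nat)
  (psi : 'rV[R]_n -> \bar R) (F1 F2 : R -> R) :
  convex_ext psi ->
  interior (dom psi) !=set0 ->
  (forall t, 0 < F1 t) -> measurable_fun [set: R] F1 ->
  (forall t, 0 < F2 t) -> measurable_fun [set: R] F2 ->
  (0 < IF F1 psi)%E -> (IF F1 psi < +oo)%E ->
  (0 < IF F2 (legendre psi))%E -> (IF F2 (legendre psi) < +oo)%E ->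
  let bound (h : R -> R) :=
    (IF F1 psi * (h (cst_n R n / fine (IF F2 (legendre psi))))%:E)%E in
  let f_bound (h : R -> R) :=
    (IF (fun t => expR (- t)) psi *
      (h (cst_n R n / fine (IF (fun t => expR (- t)) (legendre psi))))%:E)%E in
  let ef := fun t : R => expR (- t) in
  (* (a) h in Phi *)
  (forall h : R -> R, PhiClass h ->
     (as_inf h F1 F2 psi <= bound h)%E /\
     (log_concave_on (Xset (legendre psi)) (fun y => F2 (fine (legendre psi y))) ->
        (as_inf h F1 F2 psi <= G_inf h F1 F2 psi)%E /\
        (G_inf h F1 F2 psi <= bound h)%E) /\
     ((0 < IF ef psi)%E -> (IF ef psi < +oo)%E ->
      (0 < IF ef (legendre psi))%E -> (IF ef (legendre psi) < +oo)%E ->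
        (as_inf h ef ef psi <= G_inf h ef ef psi)%E /\
        (G_inf h ef ef psi <= f_bound h)%E)) /\
  (* (b) h in Psi *)
  (forall h : R -> R, PsiClass h ->
     (bound h <= as_sup h F1 F2 psi)%E /\
     (log_concave_on (Xset (legendre psi)) (fun y => F2 (fine (legendre psi y))) ->
        (G_sup h F1 F2 psi <= as_sup h F1 F2 psi)%E /\
        (bound h <= G_sup h F1 F2 psi)%E) /\
     ((0 < IF ef psi)%E -> (IF ef psi < +oo)%E ->
      (0 < IF ef (legendre psi))%E -> (IF ef (legendre psi) < +oo)%E ->
        (G_sup h ef ef psi <= as_sup h ef ef psi)%E /\
        (f_bound h <= G_sup h ef ef psi)%E)).
Proof.
move=> cvx hint F1p mF1 F2p mF2 I1p I1oo I2p I2oo bound f_bound ef.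
have efp : forall t, 0 < ef t by move=> t; exact: expR_gt0.
have mef : measurable_fun [set: R] ef.
  rewrite (_ : ef = expR \o (fun t => - t)) //.
  apply: measurableT_comp; first exact: measurable_expR.
  exact: oppr_measurable.
have lc_ef : log_concave_on (Xset (legendre psi)) (fun y => ef (fine (legendre psi y))).
  exists (@Gexp R n psi); split; first exact: Gexp_logconcave.
  move=> y [yfin _]; rewrite /Gexp.
  have := @legendre_gtNy _ _ psi cvx hint y.
  by move: yfin; case: (legendre psi y).
split.
- move=> h [hb _].
  have [g1 _ g3] := @gen _ _ psi F1 F2 h cvx hint F1p F2p mF2 I2p I2oo hb.
  split; first exact: g1.
  split.
    by move=> lc; split; [exact: inf_sub | exact: (g3 lc).1].
  move=> _ _ J0 Joo.
  have [_ _ k3] := @gen _ _ psi ef ef h cvx hint efp efp mef J0 Joo hb.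
  by split; [exact: inf_sub | exact: (k3 lc_ef).1].
- move=> h [hb _].
  have [_ g2 g3] := @gen _ _ psi F1 F2 h cvx hint F1p F2p mF2 I2p I2oo hb.
  split; first exact: g2.
  split.
    by move=> lc; split; [exact: sup_sub | exact: (g3 lc).2].
  move=> _ _ J0 Joo.
  have [_ _ k3] := @gen _ _ psi ef ef h cvx hint efp efp mef J0 Joo hb.
  by split; [exact: sup_sub | exact: (k3 lc_ef).2].
Qed.
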